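(* Let $\mathbf{C}_\rho=\mathbb{E}_{\mathbf{x}\sim\rho}[\mathbf{x}\mathbf{x}^{\top}]\in\mathbb{R}^{d\times d}$ for a distribution $\rho$ on $\mathbb{R}^d$ with finite second moments, let $\lambda>0$, and let $\Omega$ be any set of real matrices with $d$ columns. For $\mathbf{X}\in\Omega$ write $\mathbf{M}=\mathbf{X}^{\top}\mathbf{X}$ and $\mathbf{M}_\lambda=\mathbf{M}+\lambda\mathbf{I}_d$, and for $t\ge 0$ define $$\bar{\varphi}_{\lambda,t}(\mathbf{M})=\big\|\mathbf{C}_\rho^{1/2}\big(\mathbf{I}-\mathbf{M}_\lambda^{+}\mathbf{M}\big)\big\|_F^{2}+t\,\mathrm{Tr}\big(\mathbf{C}_\rho(\mathbf{M}_\lambda^{+})^{2}\mathbf{M}\big).$$ Then $$\operatorname*{argmin}_{\mathbf{X}\in\Omega}\mathrm{Tr}\big(\mathbf{C}_\rho\mathbf{M}_\lambda^{-1}\big)=\operatorname*{argmin}_{\mathbf{X}\in\Omega}\bar{\varphi}_{\lambda,\lambda}(\mathbf{M}).$$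
   Context: ${}^{+}$ denotes the Moore–Penrose pseudoinverse, $\|\cdot\|_F$ the Frobenius norm, and $\mathbf{C}_\rho^{1/2}$ the positive semidefinite square root of $\mathbf{C}_\rho$. *)

(* Defs.v *)
From HB Require Import structures.
From mathcomp Require Import all_boot all_order all_algebra.
From mathcomp Require Import all_classical all_reals all_analysis.
Set Implicit Arguments. Unset Strict Implicit. Unset Printing Implicit Defensive.
Import Order.TTheory GRing.Theory Num.Theory.
Local Open Scope ring_scope.
Local Open Scope classical_set_scope.

(* Second-moment matrix C_rho = E[x x^T] of the random vector x = (X_0,...,X_{d-1}),
   i.e. of its distribution rho on R^d. *)
Definition second_moment {dT} {T : measurableType dT} {R : realType}
  (P : probability T R) (d : nat) (X : 'I_d -> {RV P >-> R}) : 'M[R]_d :=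
  \matrix_(i, j) fine (expectation P (fun w => X i w * X j w)).

Definition penrose {R : realType} (m n : nat) (A : 'M[R]_(m, n)) (B : 'M[R]_(n, m)) :=
  [/\ A *m B *m A = A, B *m A *m B = B,
      (A *m B)^T = A *m B & (B *m A)^T = B *m A].

(* Moore-Penrose pseudoinverse (unique when it exists; it always exists over R). *)
Definition mpinv {R : realType} (m n : nat) (A : 'M[R]_(m, n)) : 'M[R]_(n, m) :=
  xget 0 [set B | penrose A B].

Definition psd {R : realType} (n : nat) (S : 'M[R]_n) :=
  S^T = S /\ forall v : 'cV[R]_n, 0 <= (v^T *m S *m v) 0 0.

Definition frob {R : realType} (m n : nat) (A : 'M[R]_(m, n)) : R :=
  Num.sqrt (\sum_i \sum_j (A i j) ^+ 2).

Definition gram {R : realType} (d : nat) (X : {m : nat & 'M[R]_(m, d)}) : 'M[R]_d :=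
  (projT2 X)^T *m projT2 X.
Definition Mlam {R : realType} (d : nat) (lam : R) (M : 'M[R]_d) : 'M[R]_d :=
  M + lam%:M.

Definition phibar {R : realType} (d : nat) (C Csqrt : 'M[R]_d) (lam t : R)
  (M : 'M[R]_d) : R :=
  frob (Csqrt *m (1%:M - mpinv (Mlam lam M) *m M)) ^+ 2
  + t * \tr (C *m (mpinv (Mlam lam M) ^+ 2) *m M).

Definition argmin {T : Type} {R : realType} (Omega : set T) (f : T -> R) : set T :=
  [set x | Omega x /\ forall y, Omega y -> f x <= f y].

(* Main.v *)
Require Import Defs.
From HB Require Import structures.
From mathcomp Require Import all_boot all_order all_algebra.
From mathcomp Require Import all_classical all_reals all_analysis.
From mathcomp Require Import ring.
Import Order.TTheory GRing.Theory Num.Theory.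
Local Open Scope ring_scope.
Local Open Scope classical_set_scope.

Lemma frob_sq (R : realType) m n (A : 'M[R]_(m, n)) :
  frob A ^+ 2 = \tr (A *m A^T).
Proof.
rewrite /frob sqr_sqrtr; last by apply: sumr_ge0 => i _; apply: sumr_ge0 => j _; apply: sqr_ge0.
rewrite /mxtrace; apply: eq_bigr => i _; rewrite mxE; apply: eq_bigr => j _.
by rewrite mxE expr2.
Qed.

Lemma Mlam_unit (R : realType) d (lam : R) (hlam : 0 < lam) (Y : {m : nat & 'M[R]_(m, d)}) :
  Mlam lam (gram Y) \in unitmx.
Proof.
rewrite -row_free_unit; apply: inj_row_free => v hv.
have h : (v *m Mlam lam (gram Y) *m v^T) 0 0 = 0 by rewrite hv mul0mx mxE.
move: h; rewrite /Mlam /gram mulmxDr mulmxDl mulmxA mul_mx_scalar -scalemxAl.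
rewrite mxE [in X in _ + X]mxE.
set w := v *m (projT2 Y)^T.
have -> : v *m (projT2 Y)^T *m projT2 Y *m v^T = w *m w^T.
  by rewrite /w trmx_mul trmxK mulmxA.
rewrite !mxE.

have p1 : 0 <= \sum_j w 0 j * w^T j 0.
  by apply: sumr_ge0 => j _; rewrite [w^T j 0]mxE -expr2 sqr_ge0.
have p2 : 0 <= \sum_j v 0 j * v^T j 0.
  by apply: sumr_ge0 => j _; rewrite mxE -expr2 sqr_ge0.
move=> /eqP; rewrite paddr_eq0 //; last by rewrite mulr_ge0 // ltW.
case/andP=> _; rewrite mulf_eq0 (gt_eqF hlam) /= => /eqP h2.
have := psumr_eq0P _ h2.
have H : forall i : 'I_d, true -> 0 <= v 0 i * v^T i 0 by move=> i _; rewrite mxE -expr2 sqr_ge0.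
move=> /(_ H) hz; apply/rowP => j; rewrite mxE.
by move: (hz j isT); rewrite mxE -expr2 => /eqP; rewrite sqrf_eq0 => /eqP.
Qed.
Lemma mpinv_unit (R : realType) n (A : 'M[R]_n) : A \in unitmx -> mpinv A = invmx A.
Proof.
move=> uA; rewrite /mpinv; apply: xget_unique.

  rewrite /= /penrose; split. by rewrite mulmxV // mul1mx. by rewrite mulVmx // mul1mx. by rewrite mulmxV // trmx1. by rewrite mulVmx // trmx1.
move=> B hB; have [h1 _ _ _] : penrose A B := hB.
have := congr1 (fun Z => invmx A *m Z *m invmx A) h1.
by rewrite /= !mulmxA mulVmx // !mul1mx -!mulmxA mulmxV // mulmx1.
Qed.


Lemma phibar_eq (R : realType) d (C S M : 'M[R]_d) (lam : R) :
  S^T = S -> S *m S = C -> M^T = M -> Mlam lam M \in unitmx ->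
  phibar C S lam lam M = lam * \tr (C *m invmx (Mlam lam M)).
Proof.
move=> hS hC hM hu.
rewrite /phibar mpinv_unit //.
set Ml := Mlam lam M; set N := invmx Ml.
have hN : N *m Ml = 1%:M by rewrite mulVmx.
have hMl : Ml^T = Ml by rewrite /Ml /Mlam linearD /= hM tr_scalar_mx.
have hNt : N^T = N by rewrite /N trmx_inv hMl.
have k1 : 1%:M - N *m M = lam *: N.
  rewrite -hN -mulmxBr /Ml /Mlam addrAC subrr add0r mul_mx_scalar //.
rewrite k1 frob_sq expr2 -mulmxE.
have tZ : (lam *: N)^T = lam *: N.
  apply/matrixP => i j; rewrite !mxE.
  by move/matrixP: hNt => /(_ i j); rewrite mxE => ->.
rewrite trmx_mul tZ hS -scalemxAr -!scalemxAl -scalemxAr mxtraceZ mxtraceZ.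
have e1 : \tr (S *m N *m N *m S) = \tr (C *m N *m N).
  by rewrite -!mulmxA mxtrace_mulC -!mulmxA hC mulmxA mxtrace_mulC.
have e2 : \tr (C *m N) = \tr (C *m N *m N *m M) + lam * \tr (C *m N *m N).
  rewrite -{1}(mulmx1 (C *m N)) -hN mulmxA /Ml /Mlam mulmxDr mxtraceD.
  by rewrite mul_mx_scalar mxtraceZ.
rewrite !mulmxA e1 e2; ring.
Qed.

Theorem proposition6 (R : realType) (dT : measure_display) (T : measurableType dT)
  (P : probability T R) (d : nat) (X : 'I_d -> {RV P >-> R})
  (hX : forall i, (X i : T -> R) \in Lfun P 2%:E)
  (Csqrt : 'M[R]_d)
  (hsqrt : psd Csqrt /\ Csqrt *m Csqrt = second_moment X)
  (lam : R) (hlam : 0 < lam)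
  (Omega : set {m : nat & 'M[R]_(m, d)}) :
  argmin Omega (fun Y => \tr (second_moment X *m invmx (Mlam lam (gram Y))))
  = argmin Omega (fun Y => phibar (second_moment X) Csqrt lam lam (gram Y)).
Proof.
case: hsqrt => [[hS _] hC].
have E : forall Y, phibar (second_moment X) Csqrt lam lam (gram Y)
   = lam * \tr (second_moment X *m invmx (Mlam lam (gram Y))).
  move=> Y; apply: phibar_eq => //; last exact: Mlam_unit.
  by rewrite /gram trmx_mul trmxK.
rewrite /argmin; apply/seteqP; split => Y /= [hY H]; split => // Z hZ.
  by rewrite !E ler_pM2l //; apply: H.
by have := H Z hZ; rewrite !E ler_pM2l.
Qed.
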